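(* Let $\mathbf p$ be a strict–weak assignment and $\lambda/\mu$ a skew shape. There exists a labeling $\theta_{\mathbf p}:\lambda/\mu\to\mathbb P$ (an injection) such that a cover $s\lessdot t$ of $\lambda/\mu$ is a descent of $\theta_{\mathbf p}$ if and only if $O_{\mathbf p}(s\lessdot t)=\mathrm{strict}$. Consequently $s^{\mathbf p}_{\lambda/\mu}=K_{\lambda/\mu,\theta_{\mathbf p}}$.
   Context: A strict–weak assignment is $\mathbf p=(p_i)_{i\in\mathbb Z}$, $p_i\in\{\mathrm{weak},\mathrm{strict}\}$, with $\overline{\mathrm{weak}}=\mathrm{strict}$ and vice versa. The poset $\mathbb N^2$ (cell $(i,j)$ in row $i$, column $j$) has covers $(i,j)\gtrdot(i-1,j)$ and $(i,j)\gtrdot(i,j-1)$; set $O_{\mathbf p}((i,j)\gtrdot(i-1,j))=\overline{p_{j-i+1}}$ and $O_{\mathbf p}((i,j)\gtrdot(i,j-1))=p_{j-i}$. A skew shape $\lambda/\mu=\{(i,j):\mu_i<j\le\lambda_i\}$ for partitions $\mu\subseteq\lambda$ is viewed as an induced subposet of $\mathbb N^2$. A wave $\mathbf p$-tableau of shape $\lambda/\mu$ is $T:\lambda/\mu\to\mathbb P$ with $T(s)<T(t)$ for covers $s\lessdot t$ labeled strict and $T(s)\le T(t)$ for covers labeled weak; $s^{\mathbf p}_{\lambda/\mu}=\sum_T\prod_ix_i^{\#T^{-1}(i)}$. For a labeling (injection) $\theta:P\to\mathbb P$ of a finite poset, a cover $s\lessdot t$ is a descent if $\theta(s)>\theta(t)$;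 a $(P,\theta)$-partition is $\sigma:P\to\mathbb P$ with $\sigma(s)\le\sigma(t)$ on non-descent covers and $\sigma(s)<\sigma(t)$ on descent covers; $K_{P,\theta}=\sum_\sigma\prod_i x_i^{\#\sigma^{-1}(i)}$. *)

(* Defs.v *)
From HB Require Import structures.
From mathcomp Require Import all_boot all_order all_algebra.
Set Implicit Arguments. Unset Strict Implicit. Unset Printing Implicit Defensive.
Import GRing.Theory Num.Theory.

Inductive sw := Weak | Strict.
Definition sw_eqb (a b : sw) : bool :=
  match a, b with Weak, Weak | Strict, Strict => true | _, _ => false end.
Lemma sw_eqP : Equality.axiom sw_eqb. Proof. by case; case; constructor. Qed.
HB.instance Definition _ := hasDecEq.Build sw sw_eqP.
Definition sw_bar (a : sw) : sw := match a with Weak => Strict | Strict => Weak end.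

Definition assignment := int -> sw.

(* partitions as weakly decreasing sequences of positive integers;
   lambda_i = part la i for i >= 1 (1-indexed rows), 0 beyond the length *)
Definition is_partition (s : seq nat) : bool := sorted geq s && (0 \notin s).
Definition part (s : seq nat) (i : nat) : nat := nth 0 s i.-1.
Definition part_incl (mu la : seq nat) : Prop := forall i, part mu i <= part la i.

(* cells (i,j) of lambda/mu : row i, column j, mu_i < j <= lambda_i *)
Definition in_skew (la mu : seq nat) (c : nat * nat) : bool :=
  (1 <= c.1) && (part mu c.1 < c.2 <= part la c.1).
Definition cells (la mu : seq nat) : seq (nat * nat) :=
  [seq c <- [seq (i, j) | i <- iota 1 (size la), j <- iota 1 (head 0 la)]
     | in_skew la mu c].
Definition skew_cell (la mu : seq nat) := seq_sub (cells la mu).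

Definition leN2 (s t : nat * nat) : bool := (s.1 <= t.1) && (s.2 <= t.2).
Definition ltN2 (s t : nat * nat) : bool := (s != t) && leN2 s t.

Definition covers (la mu : seq nat) (s t : skew_cell la mu) : bool :=
  ltN2 (val s) (val t) &&
  ~~ [exists u : skew_cell la mu, ltN2 (val s) (val u) && ltN2 (val u) (val t)].

Definition Op (p : assignment) (s t : nat * nat) : option sw :=
  let: (i, j) := t in
  if s == (i.-1, j) then (if 1 <= i then Some (sw_bar (p (j%:Z - i%:Z + 1)%R)) else None)
  else if s == (i, j.-1) then (if 1 <= j then Some (p (j%:Z - i%:Z)%R) else None)
  else None.

(* coefficient extraction of a generating function sum_T prod_i x_i^{#T^-1(i)}
   over admissible maps T : C -> P.  A monomial x_1^{a_1} ... x_n^{a_n} is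
   given by the sequence [:: a_1; ...; a_n]; such T must take values in 1..n. *)
Definition series (C : finType) (adm : (C -> nat) -> bool) (a : seq nat) : nat :=
  #|[set T : {ffun C -> 'I_(size a).+1} |
     [forall c, T c != ord0 :> 'I_(size a).+1]
     && adm (fun c => nat_of_ord (T c))
     && [forall k : 'I_(size a), #|[set c | nat_of_ord (T c) == k.+1]| == nth 0 a k]]|.

Definition is_wave (p : assignment) (la mu : seq nat) (T : skew_cell la mu -> nat) : bool :=
  [forall c, 0 < T c] &&
  [forall s, forall t, covers s t ==>
     match Op p (val s) (val t) with
     | Some Strict => T s < T t
     | Some Weak => T s <= T t
     | None => false end].

Definition s_p (p : assignment) (la mu : seq nat) : seq nat -> nat :=
  series (@is_wave p la mu).

Definition is_labeling (C : finType) (theta : C -> nat) : Prop :=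
  injective theta /\ forall c, 0 < theta c.
Definition descent (la mu : seq nat) (theta : skew_cell la mu -> nat)
  (s t : skew_cell la mu) : bool := covers s t && (theta s > theta t).

Definition is_Ppartition (la mu : seq nat) (theta : skew_cell la mu -> nat)
  (sigma : skew_cell la mu -> nat) : bool :=
  [forall c, 0 < sigma c] &&
  [forall s, forall t, covers s t ==>
     (if theta s > theta t then sigma s < sigma t else sigma s <= sigma t)].

Definition K_P (la mu : seq nat) (theta : skew_cell la mu -> nat) : seq nat -> nat :=
  series (is_Ppartition theta).

(* Main.v *)
Require Import Defs.
From mathcomp Require Import all_boot all_order all_algebra.
From mathcomp Require Import zify.
Set Implicit Arguments. Unset Strict Implicit. Unset Printing Implicit Defensive.

Lemma part_mono (s : seq nat) i i' :
  is_partition s -> i <= i' -> part s i' <= part s i.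
Proof.
move=> /andP[srt _] lii'; rewrite /part.
case: (ltnP i'.-1 (size s)) => hs; last by rewrite nth_default.
apply: (sorted_leq_nth (leT := geq)) => //.
- by move=> a b c h1 h2; apply: leq_trans h2 h1.
- by move=> x; exact: leqnn.
- rewrite inE /=; lia.
- lia.
Qed.

Lemma skew_bounds la mu i j : is_partition la -> in_skew la mu (i, j) ->
  [/\ 1 <= i, i <= size la, 1 <= j, j <= head 0 la &
      part mu i < j <= part la i].
Proof.
move=> pla /andP[/= hi /andP[hmu hla]].
have h1 : i <= size la.
  rewrite leqNgt; apply/negP => hs; move: hla; rewrite /part nth_default; first lia.
  lia.
have h2 : part la i <= head 0 la by rewrite -nth0 (part_mono pla (i' := i) (i := 1)).
split => //; try (apply/andP; split); lia.
Qed.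

Lemma in_cells la mu c : is_partition la -> in_skew la mu c -> c \in cells la mu.
Proof.
case: c => i j pla hs; have [h1 h2 h3 h4 _] := skew_bounds pla hs.
rewrite /cells mem_filter hs /=.
apply/allpairsP; exists (i, j) => /=; split => //; rewrite mem_iota; lia.
Qed.

Lemma cell_in la mu (c : skew_cell la mu) : in_skew la mu (val c).
Proof. by have := valP c; rewrite mem_filter => /andP[]. Qed.

Lemma cover_shape la mu (s t : skew_cell la mu) :
  is_partition la -> is_partition mu -> covers s t ->
  ((val s).1 = (val t).1.-1 /\ (val s).2 = (val t).2 /\ 1 < (val t).1) \/
  ((val s).1 = (val t).1 /\ (val s).2 = (val t).2.-1 /\ 1 < (val t).2).
Proof.
move=> pla pmu /andP[hlt /existsPn hno].
have hs := cell_in s; have ht := cell_in t.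
move: hlt hno hs ht; case: s => [[a b] Hs]; case: t => [[i j] Ht] /= hlt hno hs ht.
have [a1 a2 b1 b2 /andP[hma hla]] := skew_bounds pla hs.
have [i1 i2 j1 j2 /andP[hmi hli]] := skew_bounds pla ht.
move: hlt; rewrite /ltN2 /leN2 /= xpair_eqE => /andP[hne /andP[hai hbj]].
have mla := part_mono pla; have mmu := part_mono pmu.
case: (ltnP b j) => hb.
- case: (boolP ((a == i) && (b == j.-1))) => [/andP[/eqP-> /eqP->]|hn]; first by right; lia.
  have hu : in_skew la mu (a, b.+1).
    rewrite /in_skew /= a1 /=; have := mla _ _ hai; lia.
  move: (hno (SeqSub (in_cells pla hu))); rewrite /ltN2 /leN2 /= !xpair_eqE.
  move: hn; case: eqP; case: eqP; try lia; move=> *; lia.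
- have ebj : b = j by lia.
  have hai' : a < i by move: hne; rewrite ebj eqxx andbT; lia.
  case: (boolP (a == i.-1)) => [/eqP->|hn]; first by left; lia.
  have hu : in_skew la mu (a.+1, b).
    rewrite /in_skew /= /=; have := mla (a.+1) i; have := mmu a a.+1; lia.
  move: (hno (SeqSub (in_cells pla hu))); rewrite /ltN2 /leN2 /= !xpair_eqE.
  move: hn; case: eqP; case: eqP; try lia; move=> *; lia.
Qed.

Lemma cbounds la mu (c : skew_cell la mu) : is_partition la ->
  [/\ 1 <= (val c).1, (val c).1 <= size la, 1 <= (val c).2, (val c).2 <= head 0 la &
      part mu (val c).1 < (val c).2 <= part la (val c).1].
Proof. move=> pla; have := cell_in c; case: (val c) => i j; exact: skew_bounds. Qed.

Definition strict_at (p : assignment) (L E : nat) : bool := p (E%:Z - L%:Z)%R == Strict.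
Definition Gf p L N E : nat := if strict_at p L E then N - E else N + E.

Lemma Gf_inj p L N E E' : E <= N -> E' <= N -> Gf p L N E = Gf p L N E' -> E = E'.
Proof. rewrite /Gf; case: strict_at; case: strict_at; lia. Qed.

Lemma Gf_up p L N E : E.+1 <= N -> (Gf p L N E < Gf p L N E.+1) = ~~ strict_at p L E.+1.
Proof. rewrite /Gf; case: (strict_at p L E.+1); case: (strict_at p L E) => /=; lia. Qed.

Lemma Gf_down p L N E : E.+1 <= N -> (Gf p L N E.+1 < Gf p L N E) = strict_at p L E.+1.
Proof. rewrite /Gf; case: (strict_at p L E.+1); case: (strict_at p L E) => /=; lia. Qed.

Lemma cmp B g g' r r' : r < B -> g < g' -> B * g + r < B * g' + r'.
Proof. move=> hr hg; have := leq_mul (leqnn B) hg; rewrite mulnS; lia. Qed.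

Definition ecell la mu (c : skew_cell la mu) : nat := (val c).2 + size la - (val c).1.
Definition theta_p p (la mu : seq nat) (c : skew_cell la mu) : nat :=
  (size la).+1 * Gf p (size la) (size la + head 0 la + 1) (ecell c) + (val c).1.

Lemma ecell_le la mu (c : skew_cell la mu) : is_partition la ->
  ecell c < size la + head 0 la + 1.
Proof. move=> pla; have [h1 h2 h3 h4 _] := cbounds c pla; rewrite /ecell; lia. Qed.

Lemma theta_ltE p la mu (c d : skew_cell la mu) : is_partition la -> ecell c != ecell d ->
  (theta_p p c < theta_p p d) =
  (Gf p (size la) (size la + head 0 la + 1) (ecell c) <
   Gf p (size la) (size la + head 0 la + 1) (ecell d)).
Proof.
move=> pla hne; have [c1 c2 _ _ _] := cbounds c pla; have [d1 d2 _ _ _] := cbounds d pla.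
rewrite /theta_p.
set N := size la + head 0 la + 1.
case: (ltngtP (Gf p (size la) N (ecell c)) (Gf p (size la) N (ecell d))) => h.
- by apply: cmp => //; lia.
- apply/negbTE; rewrite -leqNgt ltnW //; apply: cmp => //; lia.
- by move: hne; rewrite (Gf_inj (ltnW (ecell_le c pla)) (ltnW (ecell_le d pla)) h) eqxx.
Qed.

Lemma theta_inj p la mu : is_partition la -> injective (@theta_p p la mu).
Proof.
move=> pla c d heq.
case: (eqVneq (ecell c) (ecell d)) => he; last first.
  have he' : ecell d != ecell c by rewrite eq_sym.
  have h1 := theta_ltE p pla he; have h2 := theta_ltE p pla he'.
  move: h1 h2; rewrite heq ltnn => h1 h2.
  have hg : Gf p (size la) (size la + head 0 la + 1) (ecell c) =
            Gf p (size la) (size la + head 0 la + 1) (ecell d).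
    by move: h1 h2; lia.
  by move: he; rewrite (Gf_inj (ltnW (ecell_le c pla)) (ltnW (ecell_le d pla)) hg) eqxx.
have [c1 c2 _ _ _] := cbounds c pla; have [d1 d2 _ _ _] := cbounds d pla.
move: heq; rewrite /theta_p he => /addnI hr.
apply: val_inj; rewrite [val c]surjective_pairing [val d]surjective_pairing.
move: he; rewrite /ecell hr => he; congr pair; lia.
Qed.

Lemma Op_vert p t : 1 <= t.1 -> Op p (t.1.-1, t.2) t = Some (sw_bar (p (t.2%:Z - t.1%:Z + 1)%R)).
Proof. by case: t => i j /= h; rewrite /Op eqxx h. Qed.

Lemma Op_horz p t : 0 < t.1 -> 1 <= t.2 -> Op p (t.1, t.2.-1) t = Some (p (t.2%:Z - t.1%:Z)%R).
Proof.
case: t => i j /= hi hj; rewrite /Op xpair_eqE eqxx hj.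
by case: i hi => // i' _; rewrite /= (gtn_eqF (ltnSn i')).
Qed.

Lemma key p la mu (s t : skew_cell la mu) : is_partition la -> is_partition mu ->
  covers s t -> exists x, Op p (val s) (val t) = Some x /\
    (theta_p p t < theta_p p s <-> x = Strict).
Proof.
move=> pla pmu hc.
have [s1 s2 s3 s4 _] := cbounds s pla; have [t1 t2 t3 t4 _] := cbounds t pla.
have es := ecell_le s pla; have et := ecell_le t pla.
case: (cover_shape pla pmu hc) => [[h1 [h2 h3]]|[h1 [h2 h3]]].
- have ee : ecell s = (ecell t).+1 by rewrite /ecell h1 h2; lia.
  have -> : val s = ((val t).1.-1, (val t).2) by rewrite [val s]surjective_pairing h1 h2.
  rewrite (Op_vert p (t := val t) (ltnW h3)).
  eexists; split; first by reflexivity.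
  have hne : ecell t != ecell s by rewrite ee; apply/eqP; lia.
  rewrite (theta_ltE p pla hne) ee (Gf_up _ _ (_ : (ecell t).+1 <= _)); last by lia.
  rewrite /strict_at.
  have -> : (((ecell t).+1)%:Z - (size la)%:Z = (val t).2%:Z - (val t).1%:Z + 1)%R.
    rewrite /ecell; lia.
  by case: (p _).
- have ee : ecell t = (ecell s).+1 by rewrite /ecell h1 h2; lia.
  have -> : val s = ((val t).1, (val t).2.-1) by rewrite [val s]surjective_pairing h1 h2.
  rewrite (Op_horz p (t := val t) t1 (ltnW h3)).
  eexists; split; first by reflexivity.
  have hne : ecell t != ecell s by rewrite ee; apply/eqP; lia.
  rewrite (theta_ltE p pla hne) ee (Gf_down _ _ (_ : (ecell s).+1 <= _)); last by lia.
  rewrite /strict_at -ee.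
  have -> : ((ecell t)%:Z - (size la)%:Z = (val t).2%:Z - (val t).1%:Z)%R.
    rewrite /ecell; lia.
  by case: (p _); split => // /eqP.
Qed.

Theorem proposition6p2 (p : assignment) (la mu : seq nat) :
  is_partition la -> is_partition mu -> part_incl mu la ->
  exists theta : skew_cell la mu -> nat,
    is_labeling theta /\
    (forall s t : skew_cell la mu, covers s t ->
       (descent theta s t <-> Op p (val s) (val t) = Some Strict)) /\
    s_p p la mu =1 K_P theta.
Proof.
move=> pla pmu _.
exists (@theta_p p la mu); split; [|split].
- split; first exact: theta_inj.
  move=> c; have [c1 _ _ _ _] := cbounds c pla; rewrite /theta_p; lia.
- move=> s t hc; have [x [-> hx]] := key p pla pmu hc.
  rewrite /descent hc /=; split; first by move/hx ->.
  by case=> /hx.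
- have Hw : forall f, is_wave p f = is_Ppartition (@theta_p p la mu) f.
    move=> f; rewrite /is_wave /is_Ppartition; congr andb.
    apply: eq_forallb => s; apply: eq_forallb => t.
    case hc: (covers s t) => //=.
    have [x [-> hx]] := key p pla pmu hc.
    case: x hx => hx.
    + have : ~~ (theta_p p t < theta_p p s) by apply/negP => /hx.
      by move/negbTE ->.
    + by have -> : theta_p p t < theta_p p s by apply/hx.
  move=> a; rewrite /s_p /K_P /series; apply: eq_card => T; by rewrite !inE Hw.
Qed.
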